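(* Let $\omega=e^{2\pi i/3}$ and let $S$ be a $6\times 6$ complex Hadamard matrix all of whose entries lie in $\{1,\omega,\omega^2\}$. Then $S$ is complex equivalent to the Tao matrix $$S_6^{(0)}=\begin{bmatrix} 1&1&1&1&1&1\\ 1&1&\omega&\omega&\omega^2&\omega^2\\ 1&\omega&1&\omega^2&\omega^2&\omega\\ 1&\omega&\omega^2&1&\omega&\omega^2\\ 1&\omega^2&\omega^2&\omega&1&\omega\\ 1&\omega^2&\omega&\omega^2&\omega&1 \end{bmatrix}.$$
   Context: A complex Hadamard matrix (CHM) of order $n$ is an $n\times n$ complex matrix $H$ all of whose entries have modulus one and which satisfies $HH^\dagger=nI$. A monomial unitary matrix is a unitary matrix each of whose rows and columns has exactly one nonzero entry, that entry having modulus one. Two $n\times n$ matrices $U,V$ are complex equivalent if $U=PVQ$ for some $n\times n$ monomial unitary matrices $P,Q$. *)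

(* Defs.v *)
From mathcomp Require Import all_boot all_order all_algebra all_field.
From mathcomp Require Import algC.
Set Implicit Arguments. Unset Strict Implicit. Unset Printing Implicit Defensive.
Import Order.TTheory GRing.Theory Num.Theory.
Local Open Scope ring_scope.

Definition adjmx (m n : nat) (A : 'M[algC]_(m, n)) : 'M[algC]_(n, m) :=
  (map_mx (fun z : algC => z^*) A)^T.

Definition is_CHM (n : nat) (H : 'M[algC]_n) : Prop :=
  (forall i j, `|H i j| = 1) /\ H *m adjmx H = n%:R%:M.

Definition unitarymx (n : nat) (U : 'M[algC]_n) : Prop :=
  U *m adjmx U = 1%:M.

Definition monomial_unitary (n : nat) (P : 'M[algC]_n) : Prop :=
  [/\ unitarymx P,
      (forall i, #|[set j | P i j != 0]| = 1%N),
      (forall j, #|[set i | P i j != 0]| = 1%N)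
    & (forall i j, P i j != 0 -> `|P i j| = 1)].

Definition complex_equivalent (n : nat) (U V : 'M[algC]_n) : Prop :=
  exists P Q : 'M[algC]_n,
    [/\ monomial_unitary P, monomial_unitary Q & U = P *m V *m Q].

(* omega = e^{2 pi i / 3} = (-1 + i sqrt 3)/2 *)
Definition omega : algC := (-1 + 'i * sqrtC 3) / 2.

Definition tao_exps : seq (seq nat) :=
  [:: [:: 0; 0; 0; 0; 0; 0];
      [:: 0; 0; 1; 1; 2; 2];
      [:: 0; 1; 0; 2; 2; 1];
      [:: 0; 1; 2; 0; 1; 2];
      [:: 0; 2; 2; 1; 0; 1];
      [:: 0; 2; 1; 2; 1; 0]]%N.

Definition tao6 : 'M[algC]_6 :=
  \matrix_(i < 6, j < 6) omega ^+ (nth 0%N (nth [::] tao_exps i) j).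

(* Main.v *)
Require Import Defs.
From mathcomp Require Import all_boot all_order all_algebra all_field.
From mathcomp Require Import perm algC.
From mathcomp Require Import ring zify.
Set Implicit Arguments. Unset Strict Implicit. Unset Printing Implicit Defensive.
Import Order.TTheory GRing.Theory Num.Theory.

Fixpoint allrows (k : nat) : seq (seq nat) :=
  if k is k'.+1 then [seq x :: r | x <- [:: 0; 1; 2]%N, r <- allrows k'] else [:: [::]].
Definition cands := [seq 0%N :: r | r <- allrows 5].
Definition diffs (r s : seq nat) := [seq ((p.1 + 2 * p.2) %% 3)%N | p <- zip r s].
Definition orthb (r s : seq nat) :=
  [&& count_mem 0%N (diffs r s) == 2, count_mem 1%N (diffs r s) == 2 & count_mem 2%N (diffs r s) == 2].
Definition permute (t r : seq nat) := [seq nth 0%N r j | j <- t].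
Definition perms5 := [seq 0%N :: p | p <- permutations (iota 1 5)].
Definition Z6 := nseq 6 0%N.
Definition good (R : seq (seq nat)) :=
  has (fun t => let idx := [seq index (permute t r) tao_exps | r <- R] in
                 all (fun x => x < 6)%N idx && uniq idx) perms5.
Definition cands0 := filter (orthb Z6) cands.
Definition check_body (C : seq (seq nat)) :=
  all (fun r1 =>
  all (fun r2 => if orthb r1 r2 then
  all (fun r3 => if [&& orthb r1 r3 & orthb r2 r3] then
  all (fun r4 => if [&& orthb r1 r4, orthb r2 r4 & orthb r3 r4] then
  all (fun r5 => if [&& orthb r1 r5, orthb r2 r5, orthb r3 r5 & orthb r4 r5] then
     good [:: Z6; r1; r2; r3; r4; r5] else true) C else true) C else true) C else true) C) C.
Definition check := check_body cands0.
Lemma check_ok : check. Proof. vm_compute. reflexivity. Qed.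
Lemma perms5_ok : all (fun t => [&& size t == 6, all (fun x => x < 6) t & uniq t])%N perms5.
Proof. vm_compute. reflexivity. Qed.

Local Open Scope ring_scope.

Lemma omega2 : omega ^+ 2 = - 1 - omega.
Proof.
rewrite /omega.
have Hi : 'i ^+ 2 = -1 :> algC by exact: sqrCi.
have Hs : sqrtC 3 ^+ 2 = 3 :> algC by exact: sqrtCK.
set i := 'i in Hi *; set s := sqrtC 3 in Hs *.
have -> : ((-1 + i * s) / 2) ^+ 2 = (1 - 2 * i * s + i ^+ 2 * s ^+ 2) / 4.
  rewrite expr_div_n; congr (_ / _); [ring | ring].
rewrite Hi Hs.
have H2 : (2 : algC) != 0 by rewrite pnatr_eq0.
have H4 : (4 : algC) != 0 by rewrite pnatr_eq0.
field; done.
Qed.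

Lemma omega_rel : omega ^+ 2 + omega + 1 = 0.
Proof. rewrite omega2; ring. Qed.

Lemma omega3 : omega ^+ 3 = 1.
Proof.
have -> : omega ^+ 3 = omega * omega ^+ 2 by rewrite exprS.
rewrite omega2.
have -> : omega * (-1 - omega) = - (omega ^+ 2 + omega) by ring.
rewrite omega2; ring.
Qed.

Lemma omega_conj : omega ^* = omega ^+ 2.
Proof.
rewrite omega2 /omega.
rewrite fmorph_div rmorphD rmorphN rmorph1 rmorphM.
rewrite /= conjCi.
rewrite (@conj_Creal _ (sqrtC 3)); last by rewrite ger0_real // sqrtC_ge0.
rewrite (@conj_Creal _ 2); last by rewrite realn.
have H2 : (2 : algC) != 0 by rewrite pnatr_eq0.
field; done.
Qed.

Lemma omegaX_mod n : omega ^+ (n %% 3) = omega ^+ n.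
Proof. by rewrite {2}(divn_eq n 3) exprD mulnC exprM omega3 expr1n mul1r. Qed.

Lemma omegaX_conj n : (omega ^+ n) ^* = omega ^+ (2 * n).
Proof. by rewrite rmorphXn /= omega_conj -exprM. Qed.

Lemma norm_omegaX n : `|omega ^+ n| = 1.
Proof.
have h : `|omega| ^+ 2 = 1 by rewrite normCK omega_conj -exprS omega3.
rewrite normrX.
have -> : `|omega| = 1.
  apply/eqP; rewrite -(@eqrXn2 _ 2) // ?expr1n ?h //.
by rewrite expr1n.
Qed.

Lemma sum_count (s : seq nat) : all (fun x => x < 3)%N s ->
  \sum_(x <- s) omega ^+ x =
  (count_mem 0%N s)%:R + (count_mem 1%N s)%:R * omega + (count_mem 2%N s)%:R * omega ^+ 2.
Proof.
elim: s => [_|x s IH]; first by rewrite big_nil /=; ring.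
rewrite /= => /andP [hx hs]; rewrite big_cons IH // !natrD.
case: x hx => [|[|[|x]]] // _ /=; ring.
Qed.

Lemma counts_eq (c0 c1 c2 : nat) : (c0 + c1 + c2 = 6)%N ->
  c0%:R + c1%:R * omega + c2%:R * omega ^+ 2 = 0 :> algC ->
  [/\ c0 = 2, c1 = 2 & c2 = 2]%N.
Proof.
move=> hs h.
pose X : int := (c0%:Z - c2%:Z)%R. pose Y : int := (c1%:Z - c2%:Z)%R.
have E : X%:~R + Y%:~R * omega = 0 :> algC.
  rewrite /X /Y !intrB -h omega2 /=; ring.
have E2 : ((X * X - X * Y + Y * Y)%:~R : algC) = 0.
  rewrite intrD intrB !intrM.
  have -> : (X%:~R * X%:~R - X%:~R * Y%:~R + Y%:~R * Y%:~R : algC) =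
     (X%:~R + Y%:~R * omega) * (X%:~R + Y%:~R * (-1 - omega))
     + Y%:~R ^+ 2 * (omega ^+ 2 + omega + 1) by ring.
  by rewrite E omega_rel; ring.
move/eqP: E2; rewrite intr_eq0 => /eqP E3.
have [hX hY] : X = 0 /\ Y = 0 by nia.
move: hX hY; rewrite /X /Y => hX hY.
have h1 : c0 = c2 by lia.
have h2 : c1 = c2 by lia.
split; lia.
Qed.

Definition rowseq (f : 'I_6 -> nat) : seq nat := mkseq (fun k => f (inord k)) 6.

Lemma size_rowseq f : size (rowseq f) = 6%N.
Proof. by rewrite size_mkseq. Qed.

Lemma nth_rowseq f (j : nat) : (j < 6)%N -> nth 0%N (rowseq f) j = f (inord j).
Proof. by move=> hj; rewrite nth_mkseq. Qed.

Lemma mem_allrows k r : size r = k -> all (fun x => x < 3)%N r -> r \in allrows k.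
Proof.
elim: k r => [|k IH] [|x r] //= [hs] /andP [hx hr].
have hr' := IH r hs hr.
case: x hx => [|[|[|x]]] // _; rewrite ?mem_cat ?map_f ?orbT //.
Qed.

Lemma count3 (s : seq nat) : all (fun x => x < 3)%N s ->
  (count_mem 0 s + count_mem 1 s + count_mem 2 s)%N = size s.
Proof.
elim: s => [|x s IH] //= /andP [hx hs]; rewrite -(IH hs).
case: x hx => [|[|[|x]]] //= _; lia.
Qed.

Lemma orth_from_sum (f g : 'I_6 -> nat) :
  \sum_(j < 6) omega ^+ (f j + 2 * g j) = 0 -> orthb (rowseq f) (rowseq g).
Proof.
pose h k := ((f (inord k) + 2 * g (inord k)) %% 3)%N.
have hD : diffs (rowseq f) (rowseq g) = map h (iota 0 6) by [].
have hall : all (fun x => x < 3)%N (map h (iota 0 6)).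
  by apply/allP => x /mapP [k _ ->]; rewrite /h ltn_pmod.
rewrite (eq_bigr (fun j : 'I_6 => omega ^+ h j)); last first.
  by move=> j _; rewrite /h omegaX_mod inord_val.
rewrite -(big_mkord xpredT (fun k => omega ^+ h k)) /index_iota subn0 -(big_map h xpredT (fun x => omega ^+ x)).
rewrite sum_count // => H.
have := count3 hall; rewrite size_map size_iota => hs.
have [h0 h1 h2] := counts_eq hs H.
by rewrite /orthb hD h0 h1 h2.
Qed.

Definition monmx n (s : 'S_n) (c : 'I_n -> algC) : 'M[algC]_n :=
  \matrix_(i, j) if j == s i then c i else 0.

Lemma sum_pick n (k : 'I_n) (a : algC) (F : 'I_n -> algC) :
  \sum_(l < n) (if l == k then a else 0) * F l = a * F k.
Proof.
rewrite (bigD1 k) //= eqxx big1 ?addr0 // => l /negbTE ->; by rewrite mul0r.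
Qed.

Lemma mono_unitary n (s : 'S_n) (c : 'I_n -> algC) :
  (forall i, `|c i| = 1) -> monomial_unitary (monmx s c).
Proof.
move=> hc; have cnz i : c i != 0 by rewrite -normr_eq0 hc oner_eq0.
split.
- apply/matrixP => i k; rewrite !mxE.
  under eq_bigr => l _ do rewrite /adjmx !mxE.
  rewrite sum_pick (inj_eq perm_inj) eq_sym.
  case: eqP => [->|_]; last by rewrite rmorph0 mulr0.
  by rewrite -normCK hc expr1n.
- move=> i; rewrite -(cards1 (s i)); apply: eq_card => j.
  rewrite !inE mxE; case: (j == s i); by rewrite ?cnz ?eqxx.
- move=> j; rewrite -(cards1 ((s^-1)%g j)); apply: eq_card => i.
  have e : (j == s i) = (i == (s^-1)%g j).
    by apply/eqP/eqP => [->|->]; rewrite ?permK ?permKV.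
  by rewrite !inE mxE e; case: (i == _); rewrite ?cnz ?eqxx.
- move=> i j; rewrite mxE; case: (j == s i) => [_|]; [exact: hc | by rewrite eqxx].
Qed.

Lemma omegaX_eqmod m n : m = n %[mod 3] -> omega ^+ m = omega ^+ n.
Proof. by move=> h; rewrite -omegaX_mod h omegaX_mod. Qed.

Lemma sum_pick_r n (k : 'I_n) (a : 'I_n -> algC) (F : 'I_n -> algC) :
  \sum_(l < n) F l * (if l == k then a l else 0) = F k * a k.
Proof.
rewrite (bigD1 k) //= eqxx big1 ?addr0 // => l /negbTE ->; by rewrite mulr0.
Qed.

Lemma i0 : inord 0 = ord0 :> 'I_6.
Proof. by apply: val_inj; rewrite /= inordK. Qed.

Lemma row_cands (f : 'I_6 -> nat) : f ord0 = 0%N -> (forall j, f j < 3)%N ->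
  rowseq f \in cands.
Proof.
move=> hf0 hlt.
have -> : rowseq f = 0%N :: [:: f (inord 1); f (inord 2); f (inord 3); f (inord 4); f (inord 5)].
  by rewrite /rowseq /mkseq /= i0 hf0.
rewrite /cands; apply: map_f; apply: mem_allrows => //=; by rewrite !hlt.
Qed.

Lemma check_use r1 r2 r3 r4 r5 :
  r1 \in cands0 -> r2 \in cands0 -> r3 \in cands0 -> r4 \in cands0 -> r5 \in cands0 ->
  orthb r1 r2 -> orthb r1 r3 -> orthb r2 r3 -> orthb r1 r4 -> orthb r2 r4 -> orthb r3 r4 ->
  orthb r1 r5 -> orthb r2 r5 -> orthb r3 r5 -> orthb r4 r5 ->
  good [:: Z6; r1; r2; r3; r4; r5].
Proof.
move=> H1 H2 H3 H4 H5 o12 o13 o23 o14 o24 o34 o15 o25 o35 o45.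
have := check_ok; rewrite /check /check_body.
move=> /allP h; move: (h r1 H1) => {h} /allP h; move: (h r2 H2) => {h}.
rewrite o12 => /allP h; move: (h r3 H3) => {h}.
rewrite o13 o23 => /allP h; move: (h r4 H4) => {h}.
rewrite o14 o24 o34 => /allP h; move: (h r5 H5) => {h}.
by rewrite o15 o25 o35 o45.
Qed.

Theorem mainTheorem1 (S : 'M[algC]_6) :
  is_CHM S ->
  (forall i j, S i j \in [:: 1; omega; omega ^+ 2]) ->
  complex_equivalent S tao6.
Proof.
case=> hnorm hmul hS.
pose e i j : nat := if S i j == 1 then 0%N else if S i j == omega then 1%N else 2%N.
have he i j : S i j = omega ^+ e i j.
  rewrite /e; case: eqP => [->|h1]; first by rewrite expr0.
  case: eqP => [->|h2]; first by rewrite expr1.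
  by move: (hS i j); rewrite !inE => /or3P [/eqP|/eqP|/eqP].
have elt i j : (e i j < 3)%N by rewrite /e; case: ifP => //; case: ifP.
have orthS i k : i != k -> \sum_j omega ^+ (e i j + 2 * e k j) = 0.
  move=> hik; have : (S *m adjmx S) i k = (6%:R%:M : 'M[algC]_6) i k by rewrite hmul.
  rewrite !mxE (negbTE hik) mulr0n => h; rewrite -[RHS]h.
  apply: eq_bigr => j _; by rewrite /adjmx !mxE !he omegaX_conj exprD.
pose N i j := ((e i j + 2 * e i ord0 + 2 * e ord0 j + e ord0 ord0) %% 3)%N.
have Nlt i j : (N i j < 3)%N by rewrite /N ltn_pmod.
have Ni0 i : N i ord0 = 0%N by rewrite /N; lia.
have N0j j : N ord0 j = 0%N by rewrite /N; lia.
have orthN i k : i != k -> orthb (rowseq (N i)) (rowseq (N k)).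
  move=> hik; apply: orth_from_sum.
  rewrite (eq_bigr (fun j => omega ^+ (2 * e i ord0 + 4 * e k ord0 + 3 * e ord0 ord0)
                            * omega ^+ (e i j + 2 * e k j))); last first.
    by move=> j _; rewrite -exprD; apply: omegaX_eqmod; rewrite /N; lia.
  by rewrite -mulr_sumr orthS // mulr0.
have Z6E : Z6 = rowseq (N ord0).
  apply: (@eq_from_nth _ 0%N); first by rewrite size_rowseq.
  move=> j hj; rewrite nth_rowseq // N0j nth_nseq; by case: ifP.
pose R k := rowseq (N (inord k)).
have Rc k : (0 < k < 6)%N -> R k \in cands0.
  case/andP=> hk0 hk6; rewrite mem_filter Z6E; apply/andP; split.
    apply: orthN; apply/eqP => h; move: (congr1 val h); rewrite /= inordK // => h0.
    by rewrite -h0 in hk0.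
  by apply: row_cands.
have RO a b : (a < 6)%N -> (b < 6)%N -> a != b -> orthb (R a) (R b).
  move=> ha hb hab; apply: orthN; apply: contra hab => /eqP h.
  by move: (congr1 val h); rewrite /= !inordK // => ->.
have hg := check_use (Rc 1%N isT) (Rc 2%N isT) (Rc 3%N isT) (Rc 4%N isT) (Rc 5%N isT)
  (RO 1%N 2%N isT isT isT) (RO 1%N 3%N isT isT isT) (RO 2%N 3%N isT isT isT)
  (RO 1%N 4%N isT isT isT) (RO 2%N 4%N isT isT isT) (RO 3%N 4%N isT isT isT)
  (RO 1%N 5%N isT isT isT) (RO 2%N 5%N isT isT isT) (RO 3%N 5%N isT isT isT)
  (RO 4%N 5%N isT isT isT).
rewrite Z6E -i0 in hg.
pose g t k := index (permute t (R k)) tao_exps.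
have : has (fun t => all (fun x => x < 6)%N (map (g t) (iota 0 6))
                     && uniq (map (g t) (iota 0 6))) perms5 by exact: hg.
case/hasP => t ht /andP [hall huniq].
move/allP: perms5_ok => /(_ t ht) /and3P [/eqP hst hat hut].
have hgl (i : 'I_6) : (g t i < 6)%N.
  move: hall => /allP /(_ (g t i)) h; apply: h; apply: map_f; by rewrite mem_iota add0n ltn_ord.
have hnt (j : 'I_6) : (nth 0%N t j < 6)%N.
  by have := allP hat (nth 0%N t j); apply; rewrite mem_nth // hst.
pose sg' (i : 'I_6) : 'I_6 := inord (g t i).
pose tau' (j : 'I_6) : 'I_6 := inord (nth 0%N t j).
have sg'_inj : injective sg'.
  move=> i k /(congr1 val); rewrite /= !inordK ?hgl // => h; apply: val_inj.
  have := @nth_uniq _ 0%N (map (g t) (iota 0 6)) i k.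
  rewrite size_map size_iota !(nth_map 0%N) ?size_iota // !nth_iota // !add0n h eqxx.
  by move=> /(_ (ltn_ord i) (ltn_ord k) huniq) /esym/eqP.
have tau'_inj : injective tau'.
  move=> i k /(congr1 val); rewrite /= !inordK ?hnt // => h; apply: val_inj.
  have := @nth_uniq _ 0%N t i k; rewrite hst h eqxx.
  by move=> /(_ (ltn_ord i) (ltn_ord k) hut) /esym/eqP.
pose sg := perm sg'_inj; pose tau := perm tau'_inj.
have hkey i l : N i (tau l) = nth 0%N (nth [::] tao_exps (sg i)) l.
  rewrite !permE /sg' /tau' inordK ?hgl //.
  have hin : permute t (R i) \in tao_exps by rewrite -index_mem; exact: hgl i.
  rewrite /g nth_index // /permute (nth_map 0%N) ?hst // /R nth_rowseq ?hnt //.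
  by rewrite inord_val.
exists (monmx sg (fun i => omega ^+ e i ord0)),
       (monmx tau (fun l => omega ^+ (2 * e ord0 ord0 + e ord0 (tau l)))).
split; [by apply: mono_unitary => i; exact: norm_omegaX
       |by apply: mono_unitary => i; exact: norm_omegaX|].
apply/matrixP => i j; rewrite !mxE.
under eq_bigr => l _ do rewrite !mxE.
have inner l : \sum_j0 monmx sg (fun i1 : 'I_6 => omega ^+ e i1 ord0) i j0 * tao6 j0 l
               = omega ^+ e i ord0 * omega ^+ (N i (tau l)).
  rewrite (eq_bigr (fun m => (if m == sg i then omega ^+ e i ord0 else 0) * tao6 m l)).
    by rewrite sum_pick mxE hkey.
  by move=> m _; rewrite /monmx mxE.
under eq_bigr => l _ do rewrite inner.
have e2 l : (j == tau l) = (l == (tau^-1)%g j).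
  by apply/eqP/eqP => [->|->]; rewrite ?permK ?permKV.
under eq_bigr => l _ do rewrite e2.
rewrite (sum_pick_r _ (fun l => omega ^+ (2 * e ord0 ord0 + e ord0 (tau l)))) permKV -!exprD he; apply: omegaX_eqmod; rewrite /N; lia.
Qed.
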